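(* Let $n > 0$ and $i_n = 2|W_{n-1}| + 1$. Then $$d_0(W,\sigma^{i_n} W) = \frac16 + \frac{1}{2\cdot 3^n} \qquad\text{and}\qquad d(W,\sigma^{i_n}W) = \frac29 + \frac{2}{3^{n+1}}.$$ In particular the bound $\frac29$ in $d(W,\sigma^iW)>\frac29$ (for all $i>0$) cannot be improved.
   Context: Words are finite strings over $\{0,1\}$; $\alpha(i)$ is the $i$-th letter and $|\alpha|$ the length. Define $W_0 = 0$, $W_{m+1} = W_m W_m 1 W_m$, and let $W=W(0)W(1)\cdots$ (indexed from $0$) be the unique infinite word having every $W_m$ as an initial segment. For words $\alpha,\beta$ of equal length, $d(\alpha,\beta) = |\{i:\alpha(i)\ne\beta(i)\}|/|\alpha|$, and (if $\alpha$ contains a $0$) $d_0(\alpha,\beta) = |\{i : \alpha(i)=0,\ \beta(i)=1\}|/|\{i:\alpha(i)=0\}|$. For $i>0$ and $m\ge0$ let $\alpha_m$ be the subword of $W$ of length $|W_m|$ starting at position $i$, and set $d(W,\sigma^iW) = \lim_{m\to\infty} d(W_m,\alpha_m)$ and $d_0(W,\sigma^iW) = \lim_{m\to\infty} d_0(W_m,\alpha_m)$. *)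

(* Defs.v *)
(* words over {0,1} are lists of bool (false = 0, true = 1). *)
From Stdlib Require Import Reals List Arith.
Import ListNotations.
Open Scope R_scope.

Fixpoint Wm (m : nat) : list bool :=
  match m with
  | O => [false]
  | S k => Wm k ++ Wm k ++ [true] ++ Wm k
  end.

(* The infinite word W: its k-th letter (indexed from 0) is the k-th letter
   of W_k, which has length > k; every W_m is an initial segment of it. *)
Definition Wlet (k : nat) : bool := nth k (Wm k) false.

Definition alpha (i m : nat) : list bool := map Wlet (seq i (length (Wm m))).

Definition mismatches (a b : list bool) : nat :=
  length (filter (fun p : bool * bool => negb (Bool.eqb (fst p) (snd p))) (combine a b)).

Definition zero_one (a b : list bool) : nat :=
  length (filter (fun p : bool * bool => andb (negb (fst p)) (snd p)) (combine a b)).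

Definition zeros (a : list bool) : nat := length (filter negb a).

Definition dist (a b : list bool) : R := INR (mismatches a b) / INR (length a).
Definition dist0 (a b : list bool) : R := INR (zero_one a b) / INR (zeros a).

(* the sequences whose limits define d(W, sigma^i W) and d_0(W, sigma^i W) *)
Definition dseq (i : nat) : nat -> R := fun m => dist (Wm m) (alpha i m).
Definition d0seq (i : nat) : nat -> R := fun m => dist0 (Wm m) (alpha i m).

(* Main.v *)
Require Import Defs.
From Stdlib Require Import Reals List Arith Lia Lra.
Import ListNotations.
Open Scope R_scope.


Lemma len_Wm_S m : length (Wm (S m)) = (3 * length (Wm m) + 1)%nat.
Proof. simpl. rewrite !length_app. simpl. lia. Qed.

Lemma len_Wm m : (2 * length (Wm m) + 1 = 3 ^ (S m))%nat.
Proof. induction m. reflexivity. rewrite len_Wm_S. rewrite (Nat.pow_succ_r' 3 (S m)). lia. Qed.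

Lemma len_Wm_gt m : (m < length (Wm m))%nat.
Proof. induction m. simpl; lia. rewrite len_Wm_S. lia. Qed.

Lemma Wm_prefix a c : exists r, Wm (a + c) = Wm a ++ r.
Proof.
  induction c. exists []. rewrite Nat.add_0_r, app_nil_r. reflexivity.
  destruct IHc as [r Hr]. rewrite Nat.add_succ_r. simpl. rewrite Hr.
  eexists. rewrite <- app_assoc. reflexivity.
Qed.

Lemma Wlet_nth k M : (k < length (Wm M))%nat -> Wlet k = nth k (Wm M) false.
Proof.
  intros H. unfold Wlet. destruct (le_lt_dec k M) as [h|h].
  - destruct (Wm_prefix k (M - k)) as [r Hr]. replace (k + (M-k))%nat with M in Hr by lia.
    rewrite Hr, app_nth1; auto. apply len_Wm_gt.
  - destruct (Wm_prefix M (k - M)) as [r Hr]. replace (M + (k-M))%nat with k in Hr by lia.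
    rewrite Hr, app_nth1; auto.
Qed.

Lemma map_nth_seq (l : list bool) i L : (i + L <= length l)%nat ->
  map (fun k => nth k l false) (seq i L) = firstn L (skipn i l).
Proof.
  intros H. apply nth_ext with (d := false) (d' := false).
  - rewrite length_map, length_seq, length_firstn, length_skipn. lia.
  - intros j Hj. rewrite length_map, length_seq in Hj.
    rewrite nth_firstn. replace (j <? L)%nat with true by (symmetry; apply Nat.ltb_lt; auto).
    rewrite nth_skipn.
    rewrite (nth_indep _ false (nth 0 l false)) by (rewrite length_map, length_seq; auto).
    rewrite (map_nth (fun k => nth k l false)). rewrite seq_nth; auto.
Qed.

Lemma alpha_rot s m X Y : Wm m = X ++ Y -> length X = s ->
  alpha s m = Y ++ X.
Proof.
  intros HW Hs. unfold alpha.
  assert (HS : Wm (S m) = X ++ Y ++ X ++ Y ++ true :: Wm m).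
  { simpl. rewrite HW. rewrite <- !app_assoc. reflexivity. }
  erewrite map_ext_in.
  2:{ intros k Hk. apply in_seq in Hk. apply (Wlet_nth k (S m)).
      rewrite len_Wm_S. rewrite HW, length_app in *. lia. }
  rewrite map_nth_seq.
  2:{ rewrite len_Wm_S, HW, length_app. lia. }
  rewrite HS, skipn_app, <- Hs, Nat.sub_diag, skipn_all, app_nil_l. simpl skipn.
  rewrite HW, length_app.
  replace (length X + length Y)%nat with (length (Y ++ X) + 0)%nat by (rewrite length_app; lia).
  rewrite app_assoc, firstn_app_2. simpl. rewrite app_nil_r. reflexivity.
Qed.

Lemma combine_app2 {A B : Type} (a1 a2 : list A) (b1 b2 : list B) :
  length a1 = length b1 -> combine (a1 ++ a2) (b1 ++ b2) = combine a1 b1 ++ combine a2 b2.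
Proof.
  revert b1. induction a1; destruct b1; simpl; intros H; try discriminate; auto.
  rewrite IHa1; auto.
Qed.

Lemma mis_app a1 a2 b1 b2 : length a1 = length b1 ->
  mismatches (a1 ++ a2) (b1 ++ b2) = (mismatches a1 b1 + mismatches a2 b2)%nat.
Proof. intros H. unfold mismatches. rewrite combine_app2, filter_app, length_app; auto. Qed.

Lemma zo_app a1 a2 b1 b2 : length a1 = length b1 ->
  zero_one (a1 ++ a2) (b1 ++ b2) = (zero_one a1 b1 + zero_one a2 b2)%nat.
Proof. intros H. unfold zero_one. rewrite combine_app2, filter_app, length_app; auto. Qed.

Lemma mis_cons x y a b : mismatches (x :: a) (y :: b) =
  ((if Bool.eqb x y then 0 else 1) + mismatches a b)%nat.
Proof. unfold mismatches. simpl. destruct x, y; reflexivity. Qed.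

Lemma mis_refl a : mismatches a a = 0%nat.
Proof. induction a; auto. rewrite mis_cons, IHa. destruct a; reflexivity. Qed.

Lemma mis_sym a b : mismatches a b = mismatches b a.
Proof.
  revert b; induction a; destruct b; auto. rewrite !mis_cons, IHa. destruct a, b; reflexivity.
Qed.

Lemma mis_zo a b : mismatches a b = (zero_one a b + zero_one b a)%nat.
Proof.
  revert b; induction a; destruct b; auto.
  rewrite mis_cons, IHa. unfold zero_one; simpl. destruct a, b; simpl; lia.
Qed.

Definition ones (l : list bool) := length (filter (fun b : bool => b) l).

Lemma zo_ones a b : length a = length b ->
  (zero_one a b + ones a = zero_one b a + ones b)%nat.
Proof.
  revert b; induction a as [|x a IHa]; intros [|y b]; simpl; intros H; try discriminate; auto.
  injection H as H. specialize (IHa b H). unfold zero_one, ones in *; simpl.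
  destruct x, y; simpl; lia.
Qed.

Lemma ones_app a b : ones (a ++ b) = (ones a + ones b)%nat.
Proof. unfold ones. rewrite filter_app, length_app. reflexivity. Qed.

Lemma zeros_app a b : zeros (a ++ b) = (zeros a + zeros b)%nat.
Proof. unfold zeros. rewrite filter_app, length_app. reflexivity. Qed.

Lemma zeros_Wm m : zeros (Wm m) = (3 ^ m)%nat.
Proof.
  induction m. reflexivity. simpl Wm. rewrite !zeros_app, IHm. rewrite Nat.pow_succ_r'. change (zeros (true :: Wm m)) with (zeros (Wm m)). rewrite IHm. lia.
Qed.

Definition T x w y := mismatches (x :: w) (w ++ [y]).

Lemma T_nil x y : T x [] y = if Bool.eqb x y then 0%nat else 1%nat.
Proof. unfold T. simpl. rewrite mis_cons. unfold mismatches; simpl. lia. Qed.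

Lemma T_cons x a w y : T x (a :: w) y = ((if Bool.eqb x a then 0 else 1) + T a w y)%nat.
Proof. unfold T. simpl. rewrite mis_cons. unfold mismatches; simpl. lia. Qed.

Lemma T_app x u a v y : T x (u ++ a :: v) y = (T x u a + T a v y)%nat.
Proof.
  revert x; induction u; intros x; simpl.
  - rewrite T_cons, T_nil. reflexivity.
  - rewrite !T_cons, IHu. lia.
Qed.

Lemma Wm_last m : exists D, Wm m = D ++ [false].
Proof.
  induction m. exists []. reflexivity. destruct IHm as [D HD].
  simpl. set (W := Wm m) at 1 2. rewrite HD. exists (W ++ W ++ true :: D).
  rewrite <- !app_assoc. reflexivity.
Qed.

Lemma Wm_head m : exists E, Wm m = false :: E.
Proof. induction m. eexists; reflexivity. destruct IHm as [E HE]. simpl; rewrite HE. eexists; reflexivity. Qed.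

Lemma T_Wm j : T true (Wm j) true = (3 ^ j + 1)%nat.
Proof.
  induction j. reflexivity.
  destruct (Wm_last j) as [D HD]. destruct (Wm_head j) as [E HE].
  assert (H0 : (T false D false + 1 = T true D false)%nat).
  { destruct D; simpl. reflexivity. simpl in HE. rewrite HD in HE. injection HE as -> _.
    rewrite !T_cons. simpl. lia. }
  assert (H1 : T true (Wm j) true = (T true D false + 1)%nat).
  { rewrite HD, T_app, T_nil. reflexivity. }
  simpl Wm.
  replace (Wm j ++ Wm j ++ true :: Wm j) with (D ++ false :: (D ++ false :: ([] ++ true :: Wm j)))
    by (rewrite HD, <- !app_assoc; reflexivity).
  rewrite !T_app, T_nil. simpl (Bool.eqb false true). rewrite Nat.pow_succ_r'. lia.
Qed.

Lemma main_k j k : exists Q,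
  Wm (S j + k) = (Wm j ++ Wm j) ++ true :: Q /\
  mismatches (Wm (S j + k)) (Q ++ (Wm j ++ Wm j) ++ [true]) = (3 ^ k * (3 ^ j + 1))%nat /\
  mismatches (Wm (S j + k)) (Q ++ true :: (Wm j ++ Wm j)) = (3 ^ k * (3 ^ j + 1))%nat.
Proof.
  set (P := Wm j ++ Wm j). induction k.
  - exists (Wm j). rewrite Nat.add_0_r. simpl Wm. fold P. split; [|split].
    + subst P. rewrite <- app_assoc. reflexivity.
    + subst P. rewrite <- !app_assoc. rewrite !mis_app by reflexivity.
      rewrite !mis_refl. change (true :: Wm j) with ([true] ++ Wm j).
      rewrite mis_sym. rewrite <- (T_Wm j). unfold T. rewrite mis_sym. simpl. lia.
    + subst P. rewrite mis_app by reflexivity. rewrite mis_refl.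
      replace (Wm j ++ true :: Wm j) with ((Wm j ++ [true]) ++ Wm j) by (rewrite <- app_assoc; reflexivity).
      replace (true :: Wm j ++ Wm j) with ((true :: Wm j) ++ Wm j) by reflexivity.
      rewrite mis_app by (simpl; rewrite length_app; simpl; lia).
      rewrite mis_refl, <- (T_Wm j). unfold T. rewrite mis_sym. simpl. lia.
  - destruct IHk as [Q [HC [Hf Hg]]].
    set (C := Wm (S j + k)) in *.
    exists (Q ++ C ++ true :: C).
    assert (HA : Wm (S j + S k) = C ++ C ++ [true] ++ C).
    { rewrite Nat.add_succ_r. reflexivity. }
    assert (HL : length C = length (Q ++ P ++ [true])).
    { rewrite HC, !length_app. simpl. lia. }
    assert (HL2 : length C = length (Q ++ true :: P)).
    { rewrite HC, !length_app. simpl. lia. }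
    rewrite HA. split; [|split].
    + rewrite HC. rewrite <- !app_assoc. reflexivity.
    + replace ((Q ++ C ++ true :: C) ++ P ++ [true]) with
        ((Q ++ P ++ [true]) ++ (Q ++ true :: P) ++ [true] ++ (Q ++ P ++ [true])).
      2:{ rewrite HC. rewrite <- !app_assoc. simpl. rewrite <- !app_assoc. reflexivity. }
      rewrite !mis_app by auto. rewrite Hf, Hg, mis_refl. rewrite Nat.pow_succ_r'. lia.
    + replace ((Q ++ C ++ true :: C) ++ true :: P) with
        ((Q ++ P ++ [true]) ++ (Q ++ true :: P) ++ [true] ++ (Q ++ true :: P)).
      2:{ rewrite HC. rewrite <- !app_assoc. simpl. rewrite <- !app_assoc. reflexivity. }
      rewrite !mis_app by auto. rewrite Hf, Hg, mis_refl. rewrite Nat.pow_succ_r'. lia.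
Qed.

Lemma vals j k :
  let m := (S j + k)%nat in
  mismatches (Wm m) (alpha (3 ^ S j) m) = (3 ^ k * (3 ^ j + 1))%nat /\
  (2 * zero_one (Wm m) (alpha (3 ^ S j) m) = 3 ^ k * (3 ^ j + 1))%nat.
Proof.
  intros m. destruct (main_k j k) as [Q [HC [Hf _]]]. fold m in HC, Hf.
  assert (Ha : alpha (3 ^ S j) m = Q ++ (Wm j ++ Wm j) ++ [true]).
  { apply (alpha_rot _ _ ((Wm j ++ Wm j) ++ [true]) Q). rewrite HC, <- !app_assoc. reflexivity.
    rewrite !length_app, <- len_Wm. simpl. lia. }
  rewrite Ha. split; auto.
  rewrite <- Hf, mis_zo.
  pose proof (zo_ones (Wm m) (Q ++ (Wm j ++ Wm j) ++ [true])) as Hz.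
  assert (Ho : ones (Wm m) = ones (Q ++ (Wm j ++ Wm j) ++ [true])).
  { rewrite HC, !ones_app. change (true :: Q) with ([true] ++ Q). rewrite ones_app. lia. }
  assert (Hl : length (Wm m) = length (Q ++ (Wm j ++ Wm j) ++ [true])).
  { rewrite HC, !length_app. simpl. lia. }
  specialize (Hz Hl). lia.
Qed.

Lemma my_bound t X : 1 <= t -> 1 <= X ->
  Rabs (X * (t + 1) / ((9 * t * X - 1) / 2) - (2/9 + 2/(9*t))) <= 1 / X.
Proof.
  intros Ht HX.
  assert (HD : 0 < 9 * t * X - 1) by nra.
  replace (X * (t + 1) / ((9 * t * X - 1) / 2) - (2/9 + 2/(9*t)))
    with (2 * (t+1) / (9 * t * (9 * t * X - 1))) by (field; lra).
  assert (H0 : 0 <= 2 * (t+1) / (9 * t * (9 * t * X - 1))).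
  { unfold Rdiv. apply Rle_mult_inv_pos; nra. }
  rewrite Rabs_pos_eq by exact H0.
  apply Rge_le, Rminus_ge.
  replace (1 / X - 2 * (t+1) / (9 * t * (9 * t * X - 1)))
    with ((9 * t * (9 * t * X - 1) - 2 * (t+1) * X) * / (X * (9 * t * (9 * t * X - 1)))) by (field; lra).
  apply Rle_ge, Rle_mult_inv_pos; nra.
Qed.

Lemma INR3 : INR 3 = 3. Proof. simpl. lra. Qed.

Lemma part1 j :
  let i_n := (2 * length (Wm (S j - 1)) + 1)%nat in
  Un_cv (d0seq i_n) (1/6 + 1 / (2 * 3 ^ S j)) /\
  Un_cv (dseq i_n) (2/9 + 2 / 3 ^ (S j + 1)).
Proof.
  intros i_n.
  assert (Hi : i_n = (3 ^ S j)%nat).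
  { unfold i_n. rewrite Nat.sub_succ, Nat.sub_0_r. apply len_Wm. }
  rewrite Hi. clear i_n Hi.
  assert (Ht : 1 <= 3 ^ j) by (apply pow_R1_Rle; lra).
  split.
  - intros eps He. exists (S j). intros m Hm.
    replace m with (S j + (m - S j))%nat by lia. set (k := (m - S j)%nat).
    assert (HX : 1 <= 3 ^ k) by (apply pow_R1_Rle; lra).
    unfold d0seq, dist0. rewrite zeros_Wm. destruct (vals j k) as [_ Hz].
    apply (f_equal INR) in Hz. rewrite !mult_INR, plus_INR, !pow_INR, INR3 in Hz.
    rewrite pow_INR, INR3.
    replace (INR (zero_one (Wm (S j + k)) (alpha (3 ^ S j) (S j + k))) / 3 ^ (S j + k))
      with (1 / 6 + 1 / (2 * 3 ^ S j)).
    { unfold R_dist. rewrite Rminus_diag, Rabs_R0. exact He. }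
    set (z := INR (zero_one (Wm (S j + k)) (alpha (3 ^ S j) (S j + k)))) in *.
    simpl (INR 2) in Hz.
    change (INR 1) with 1 in Hz. replace z with (3 ^ k * (3 ^ j + 1) / 2) by lra.
    rewrite pow_add. simpl (3 ^ S j). field. lra.
  - intros eps He.
    destruct (pow_lt_1_zero (1/3)) with (y := eps) as [N0 HN0]; [rewrite Rabs_pos_eq; lra | exact He |].
    exists (S j + N0)%nat. intros m Hm.
    replace m with (S j + (m - S j))%nat by lia. set (k := (m - S j)%nat).
    assert (HX : 1 <= 3 ^ k) by (apply pow_R1_Rle; lra).
    unfold dseq, Defs.dist. destruct (vals j k) as [Hf _]. rewrite Hf.
    pose proof (len_Wm (S j + k)) as HL.
    apply (f_equal INR) in HL. rewrite plus_INR, mult_INR, pow_INR, INR3 in HL. simpl (INR 2) in HL.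
    change (INR 1) with 1 in HL. replace (INR (length (Wm (S j + k)))) with ((3 ^ S (S j + k) - 1) / 2) by lra.
    rewrite mult_INR, plus_INR, !pow_INR, INR3. simpl (INR 1).
    replace (3 ^ S (S j + k)) with (9 * 3 ^ j * 3 ^ k) by (rewrite <- tech_pow_Rmult, pow_add; simpl; ring).
    replace (2 / 3 ^ (S j + 1)) with (2 / (9 * 3 ^ j)) by (rewrite pow_add; simpl; field; lra).
    unfold R_dist.
    eapply Rle_lt_trans. apply (my_bound (3 ^ j) (3 ^ k)); auto.
    replace (1 / 3 ^ k) with ((1/3) ^ k).
    2:{ unfold Rdiv. rewrite Rmult_1_l, Rmult_1_l, pow_inv. reflexivity. }
    specialize (HN0 k ltac:(unfold k; lia)). rewrite Rabs_pos_eq in HN0; [exact HN0|].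
    apply pow_le. lra.
Qed.

Theorem proposition2 :
  (forall n : nat, (0 < n)%nat ->
     let i_n := (2 * length (Wm (n - 1)) + 1)%nat in
     Un_cv (d0seq i_n) (1/6 + 1 / (2 * 3 ^ n)) /\
     Un_cv (dseq i_n) (2/9 + 2 / 3 ^ (n + 1))) /\
  (* the bound 2/9 cannot be improved *)
  (forall eps : R, 0 < eps ->
     exists i : nat, (0 < i)%nat /\
       exists L : R, Un_cv (dseq i) L /\ L < 2/9 + eps).
Proof.
  split.
  - intros n Hn. destruct n as [|j]; [lia|]. apply part1.
  - intros eps He.
    destruct (pow_lt_1_zero (1/3)) with (y := eps / 2) as [N0 HN0];
      [rewrite Rabs_pos_eq; lra | lra |].
    exists (2 * length (Wm (S N0 - 1)) + 1)%nat. split; [lia|].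
    exists (2/9 + 2 / 3 ^ (S N0 + 1)). split.
    + apply (proj2 (part1 N0)).
    + specialize (HN0 (S N0 + 1)%nat ltac:(lia)).
      rewrite Rabs_pos_eq in HN0 by (apply pow_le; lra).
      replace (2 / 3 ^ (S N0 + 1)) with (2 * (1/3) ^ (S N0 + 1)).
      { lra. }
      unfold Rdiv. rewrite Rmult_1_l, pow_inv. reflexivity.
Qed.
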